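(* Let $V$ be a finite-dimensional scalar product space, $T$ a self-adjoint operator on $V$, $\lambda$ an eigenvalue of $T$, and $U=T-\lambda I$. Let $x\in K_\lambda$ generate a cycle of generalized eigenvectors of length $p$ (i.e. $p$ is the smallest positive integer with $U^p x=0$), put $v_i=U^{p-i}x$ for $i=1,\dots,p$, and let $H=\operatorname{span}\{v_1,\dots,v_p\}$. If $\langle v_1,v_p\rangle\neq 0$, then there exists $x'\in H$ generating a cycle of generalized eigenvectors $v'_i=U^{p-i}x'$ ($i=1,\dots,p$) of length $p$ which spans $H$, such that $v'_1,\dots,v'_p$ is a skew-normal sequence whose sign is $\operatorname{sgn}\langle v_1,v_p\rangle$ if $\lambda\in\mathbb{R}$, and $1$ if $\lambda\in\mathbb{C}\setminus\mathbb{R}$.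
   Context: A scalar product is a non-degenerate symmetric bilinear form $\langle\cdot,\cdot\rangle$ over $\mathbb{R}$ or $\mathbb{C}$ (bilinear in the complex case). $T$ is self-adjoint if $\langle Tx,y\rangle=\langle x,Ty\rangle$ for all $x,y$. If $V$ is real, non-real eigenvalues and their generalized eigenspaces are taken in the complexification $V^{\mathbb{C}}$ with the bilinear extension of the scalar product and of $T$; when $\lambda$ is real, everything takes place in the real space $V$ (so $x$ is real and $\langle v_1,v_p\rangle$ is real). $K_\lambda=\{x:(T-\lambda I)^m x=0\text{ for some }m\ge1\}$. A sequence $w_1,\dots,w_p$ is a skew-normal sequence of sign $\varepsilon\in\{\pm1\}$ if $\langle w_i,w_j\rangle=\varepsilon$ when $i+j=p+1$ and $0$ otherwise. *)

(* Defs.v *)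
From HB Require Import structures.
From mathcomp Require Import all_boot all_order all_algebra.
Set Implicit Arguments. Unset Strict Implicit. Unset Printing Implicit Defensive.
Import Order.TTheory GRing.Theory Num.Theory.
Local Open Scope ring_scope.

Section Defs.
Variable F : fieldType.

Definition scalar_product (V : lmodType F) (b : V -> V -> F) : Prop :=
  [/\ (forall x y, b x y = b y x),
      (forall a x y z, b (a *: x + y) z = a * b x z + b y z)
    & (forall x, (forall y, b x y = 0) -> x = 0)].

Definition self_adjoint (V : lmodType F) (b : V -> V -> F) (T : V -> V) : Prop :=
  forall x y, b (T x) y = b x (T y).

Definition is_eigenvalue (V : lmodType F) (T : V -> V) (lam : F) : Prop :=
  exists v, v != 0 /\ T v = lam *: v.

Definition Uop (V : lmodType F) (T : V -> V) (lam : F) : V -> V :=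
  fun x => T x - lam *: x.

Definition cycle_len (V : lmodType F) (T : V -> V) (lam : F) (x : V) (p : nat) : Prop :=
  [/\ (0 < p)%N, iter p (Uop T lam) x = 0
    & forall k, (0 < k < p)%N -> iter k (Uop T lam) x != 0].

Definition cyc_vec (V : lmodType F) (T : V -> V) (lam : F) (x : V) (p : nat) (i : nat) : V :=
  iter (p - i) (Uop T lam) x.

Definition cyc_span (V : vectType F) (T : V -> V) (lam : F) (x : V) (p : nat) : {vspace V} :=
  (<<[seq cyc_vec T lam x p i | i <- iota 1 p]>>)%VS.

Definition skew_normal (V : lmodType F) (b : V -> V -> F) (w : nat -> V) (p : nat) (eps : F) : Prop :=
  (eps = 1 \/ eps = -1) /\
  forall i j, (1 <= i <= p)%N -> (1 <= j <= p)%N ->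
    b (w i) (w j) = (if (i + j == p.+1)%N then eps else 0).

End Defs.

(* Main.v *)
Require Import Defs.
From HB Require Import structures.
From mathcomp Require Import all_boot all_order all_algebra.
From mathcomp Require Import zify ring.
Import Order.TTheory GRing.Theory Num.Theory.
Set Implicit Arguments. Unset Strict Implicit. Unset Printing Implicit Defensive.
Local Open Scope ring_scope.



Definition Ulf (F : fieldType) (V : vectType F) (T : 'End(V)) (lam : F) : 'End(V) :=
  (T - lam *: \1%VF).

Lemma UlfE (F : fieldType) (V : vectType F) (T : 'End(V)) (lam : F) v :
  Ulf T lam v = Uop T lam v.
Proof. by rewrite /Ulf /Uop add_lfunE opp_lfunE scale_lfunE id_lfunE. Qed.

Definition Fn (F : fieldType) (V : vectType F) (T : 'End(V)) (lam : F) n : 'End(V) :=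
  iter n (fun f => (Ulf T lam \o f)%VF) \1%VF.

Lemma FnE (F : fieldType) (V : vectType F) (T : 'End(V)) (lam : F) n v :
  Fn T lam n v = iter n (Uop T lam) v.
Proof.
elim: n => [|n IH] /=; first by rewrite /Fn /= id_lfunE.
by rewrite /Fn /= comp_lfunE -/(Fn T lam n) IH UlfE.
Qed.

Lemma iterUP (F : fieldType) (V : vectType F) (T : 'End(V)) (lam : F) n a u v :
  iter n (Uop T lam) (a *: u + v) = a *: iter n (Uop T lam) u + iter n (Uop T lam) v.
Proof. by rewrite -!FnE linearP. Qed.

Lemma iterU0 (F : fieldType) (V : vectType F) (T : 'End(V)) (lam : F) n :
  iter n (Uop T lam) 0 = 0.
Proof. by rewrite -FnE linear0. Qed.



Lemma iter_ge (F : fieldType) (V : vectType F) (T : 'End(V)) (lam : F) x p m :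
  iter p (Uop T lam) x = 0 -> (p <= m)%N -> iter m (Uop T lam) x = 0.
Proof.
move=> h le; rewrite -(subnK le) iterD h; exact: iterU0.
Qed.

Lemma gen_in (F : fieldType) (V : vectType F) (T : 'End(V)) (lam : F) x p j :
  (j < p)%N -> iter j (Uop T lam) x \in cyc_span T lam x p.
Proof.
move=> jp; apply: memv_span; apply/mapP; exists (p - j)%N.
  by rewrite mem_iota; apply/andP; split; lia.
by rewrite /cyc_vec; congr iter; lia.
Qed.

Lemma span_closed (F : fieldType) (V : vectType F) (T : 'End(V)) (lam : F) x p n v :
  iter p (Uop T lam) x = 0 -> v \in cyc_span T lam x p ->
  iter n (Uop T lam) v \in cyc_span T lam x p.
Proof.
move=> hp hv; rewrite -FnE memv_preim.
have : (cyc_span T lam x p <= Fn T lam n @^-1: cyc_span T lam x p)%VS.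
  apply/span_subvP => w /mapP [i]; rewrite mem_iota => /andP [i1 i2] ->.
  rewrite -memv_preim FnE /cyc_vec -iterD.
  case: (ltnP (n + (p - i)) p) => h; first exact: gen_in.
  by rewrite (iter_ge hp h) mem0v.
by move/subvP; apply.
Qed.

Lemma span_kill (F : fieldType) (V : vectType F) (T : 'End(V)) (lam : F) x p n v :
  iter p (Uop T lam) x = 0 -> (p <= n)%N -> v \in cyc_span T lam x p ->
  iter n (Uop T lam) v = 0.
Proof.
move=> hp hn hv; apply/eqP; rewrite -FnE -memv_ker.
have : (cyc_span T lam x p <= lker (Fn T lam n))%VS.
  apply/span_subvP => w /mapP [i]; rewrite mem_iota => /andP [i1 i2] ->.
  by rewrite memv_ker FnE /cyc_vec -iterD (iter_ge hp) //; lia.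
by move/subvP; apply.
Qed.



Lemma cyc_free (F : fieldType) (V : vectType F) (T : 'End(V)) (lam : F) y p d :
  iter p (Uop T lam) y = 0 -> iter p.-1 (Uop T lam) y != 0 -> (d <= p)%N ->
  free [seq iter j (Uop T lam) y | j <- iota (p - d) d].
Proof.
move=> hp hn; elim: d => [|d IH] hd; first by rewrite nil_free.
have -> : iota (p - d.+1) d.+1 = (p - d.+1)%N :: iota (p - d) d.
  by rewrite /=; congr (_ :: iota _ _); lia.
rewrite /= free_cons IH ?andbT; last by lia.
apply/negP => hin.
have : (<<[seq iter j (Uop T lam) y | j <- iota (p - d) d]>> <= lker (Fn T lam d))%VS.
  apply/span_subvP => w /mapP [j]; rewrite mem_iota => /andP [j1 j2] ->.
  by rewrite memv_ker FnE -iterD (iter_ge hp) //; lia.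
move/subvP => /(_ _ hin); rewrite memv_ker FnE -iterD.
have -> : (d + (p - d.+1))%N = p.-1 by lia.
by rewrite (negbTE hn).
Qed.

Lemma span_eq (F : fieldType) (V : vectType F) (T : 'End(V)) (lam : F) x y p :
  (0 < p)%N -> iter p (Uop T lam) x = 0 -> y \in cyc_span T lam x p ->
  iter p.-1 (Uop T lam) y != 0 ->
  cyc_span T lam y p = cyc_span T lam x p.
Proof.
move=> p0 hx hy hn.
have hyp : iter p (Uop T lam) y = 0 by apply: (span_kill hx).
apply/eqP; rewrite eqEdim; apply/andP; split.
  rewrite {1}/cyc_span; apply/span_subvP => w /mapP [i _] ->; exact: span_closed.
apply: (@leq_trans p).
  by apply: leq_trans (dim_span _) _; rewrite size_map size_iota.
have hf := cyc_free hyp hn (leqnn p).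
rewrite subnn in hf.
move: hf; rewrite /free => /eqP hf.
rewrite size_map size_iota in hf.
apply: (@leq_trans (\dim <<[seq iter j (Uop T lam) y | j <- iota 0 p]>>)); first by rewrite hf.
apply: dimvS; apply/span_subvP => w /mapP [j]; rewrite mem_iota => /andP [_ j2] ->.
apply: gen_in; by rewrite add0n in j2.
Qed.




Lemma bDl (F : fieldType) (V : vectType F) (b : V -> V -> F) u v z :
  scalar_product b -> b (u + v) z = b u z + b v z.
Proof. by case=> _ h _; rewrite -{1}(scale1r u) h mul1r. Qed.

Lemma b0l (F : fieldType) (V : vectType F) (b : V -> V -> F) z :
  scalar_product b -> b 0 z = 0.
Proof.
move=> sp; have h := bDl 0 0 z sp; rewrite addr0 in h.
by apply: (addrI (b 0 z)); rewrite -h addr0.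
Qed.

Lemma bZl (F : fieldType) (V : vectType F) (b : V -> V -> F) a u z :
  scalar_product b -> b (a *: u) z = a * b u z.
Proof. by move=> sp; case: (sp) => _ h _; rewrite -(addr0 (a *: u)) h b0l // addr0. Qed.

Lemma bDr (F : fieldType) (V : vectType F) (b : V -> V -> F) u v z :
  scalar_product b -> b z (u + v) = b z u + b z v.
Proof. by move=> sp; case: (sp) => s _ _; rewrite !(s z) bDl. Qed.

Lemma bZr (F : fieldType) (V : vectType F) (b : V -> V -> F) a u z :
  scalar_product b -> b z (a *: u) = a * b z u.
Proof. by move=> sp; case: (sp) => s _ _; rewrite !(s z) bZl. Qed.

Lemma b0r (F : fieldType) (V : vectType F) (b : V -> V -> F) z :
  scalar_product b -> b z 0 = 0.
Proof. by move=> sp; case: (sp) => s _ _; rewrite s b0l. Qed.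

Lemma bU (F : fieldType) (V : vectType F) (b : V -> V -> F) (T : 'End(V)) lam u w :
  scalar_product b -> self_adjoint b T -> b (Uop T lam u) w = b u (Uop T lam w).
Proof.
move=> sp sa; rewrite /Uop -!scaleNr bDl // bDr // bZl // bZr // sa. reflexivity.
Qed.

Lemma bUn (F : fieldType) (V : vectType F) (b : V -> V -> F) (T : 'End(V)) lam n u w :
  scalar_product b -> self_adjoint b T ->
  b (iter n (Uop T lam) u) w = b u (iter n (Uop T lam) w).
Proof.
move=> sp sa; elim: n w => [|n IH] w //=.
by rewrite bU // IH -iterSr.
Qed.

Lemma expand (F : fieldType) (V : vectType F) (b : V -> V -> F) (T : 'End(V)) lam y a m k :
  scalar_product b -> self_adjoint b T ->
  let B j := b y (iter j (Uop T lam) y) in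
  b (a *: iter m (Uop T lam) y + y) (iter k (Uop T lam) (a *: iter m (Uop T lam) y + y)) =
  a * (a * B (m + (k + m))%N + B (k + m)%N) + (a * B (m + k)%N + B k).
Proof.
move=> sp sa B; rewrite iterUP -iterD bDr // bZr // !bDl // !bZl // !bUn // -!iterD.
by rewrite /B.
Qed.

Lemma gram (F : fieldType) (V : vectType F) (b : V -> V -> F) (T : 'End(V)) lam x p eps y0 :
  scalar_product b -> self_adjoint b T -> (0 < p)%N -> iter p (Uop T lam) x = 0 ->
  (2%:R : F) != 0 -> eps != 0 -> y0 \in cyc_span T lam x p ->
  b y0 (iter p.-1 (Uop T lam) y0) = eps ->
  exists y, y \in cyc_span T lam x p /\
    forall k, (k < p)%N -> b y (iter k (Uop T lam) y) = if k == p.-1 then eps else 0.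
Proof.
move=> sp sa p0 hx h2 he hy0 hb0.
have Bz : forall y j, y \in cyc_span T lam x p -> (p <= j)%N -> b y (iter j (Uop T lam) y) = 0.
  by move=> y j hy hj; rewrite (span_kill hx hj hy) b0r.
suff H : forall n, (n <= p.-1)%N -> exists y, y \in cyc_span T lam x p /\
    b y (iter p.-1 (Uop T lam) y) = eps /\
    forall k, (p.-1 - n <= k < p.-1)%N -> b y (iter k (Uop T lam) y) = 0.
  have [y [hy [hyp hyk]]] := H _ (leqnn p.-1).
  exists y; split => // k kp; case: eqP => [->//|kn]; apply: hyk; lia.
elim => [|n IH] hn.
  by exists y0; split => //; split => // k; lia.
have [y [hy [hyp hyk]]] := IH (ltnW hn).
pose k0 := (p.-1 - n.+1)%N.
pose a := - b y (iter k0 (Uop T lam) y) / (2%:R * eps).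
exists (a *: iter n.+1 (Uop T lam) y + y); split.
  by rewrite memvD // memvZ // span_closed.
split.
  rewrite expand //.
  rewrite (Bz _ (n.+1 + (p.-1 + n.+1))%N hy) ?(Bz _ (p.-1 + n.+1)%N hy) ?(Bz _ (n.+1 + p.-1)%N hy); try lia.
  by rewrite hyp; ring.
move=> k hk; rewrite expand //.
have [->|kk] := eqVneq k k0.
  have -> : (k0 + n.+1 = p.-1)%N by rewrite /k0; lia.
  have -> : (n.+1 + k0 = p.-1)%N by rewrite /k0; lia.
  rewrite (Bz _ (n.+1 + p.-1)%N hy); last lia.
  rewrite hyp /a; field; apply/andP; split => //.
rewrite (Bz _ (n.+1 + (k + n.+1))%N hy) ?(Bz _ (k + n.+1)%N hy) ?(Bz _ (n.+1 + k)%N hy); try lia.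
rewrite hyk; last by rewrite /k0 in kk; lia.
ring.
Qed.



Lemma main_gen (F : numFieldType) (V : vectType F) (b : V -> V -> F) (T : 'End(V))
      (lam : F) (x : V) (p : nat) (eps s : F) :
  scalar_product b -> self_adjoint b T -> cycle_len T lam x p ->
  (eps = 1 \/ eps = -1) ->
  s ^+ 2 * b (cyc_vec T lam x p 1) (cyc_vec T lam x p p) = eps ->
  exists x' : V,
    [/\ x' \in cyc_span T lam x p, cycle_len T lam x' p,
        cyc_span T lam x' p = cyc_span T lam x p
      & skew_normal b (cyc_vec T lam x' p) p eps].
Proof.
move=> sp sa [p0 hx hk] heps hs.
have he : eps != 0 by case: heps => ->; rewrite ?oppr_eq0 oner_eq0.
have h2 : (2%:R : F) != 0 by rewrite pnatr_eq0.
have hy0 : s *: x \in cyc_span T lam x p by rewrite memvZ // (gen_in _ _ _ p0).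
have hb0 : b (s *: x) (iter p.-1 (Uop T lam) (s *: x)) = eps.
  rewrite -(addr0 (s *: x)) iterUP iterU0 !addr0 bZl // bZr //.
  rewrite -hs /cyc_vec subnn /=; case: (sp) => sym _ _; rewrite (sym x).
  rewrite subn1; ring.
have [y [hy hg]] := gram sp sa p0 hx h2 he hy0 hb0.
have hyp : iter p (Uop T lam) y = 0 by apply: (span_kill hx).
have hn : iter p.-1 (Uop T lam) y != 0.
  apply/eqP => h; move: (hg p.-1); rewrite h b0r // eqxx => /(_ _)/esym.
  have : (p.-1 < p)%N by lia.
  by move=> H /(_ H) /eqP; rewrite (negbTE he).
exists y; split => //.
- split => // k /andP [k1 k2]; apply/eqP => h.
  have : iter p.-1 (Uop T lam) y = 0.
    have -> : p.-1 = (p.-1 - k + k)%N by lia.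
    by rewrite iterD h iterU0.
  by move/eqP; rewrite (negbTE hn).
- exact: span_eq.
- split => // i j /andP [i1 i2] /andP [j1 j2].
  rewrite /cyc_vec bUn // -iterD.
  case: (ltnP (p - i + (p - j)) p) => h.
    rewrite hg //; congr (if _ then _ else _); apply/eqP/eqP; lia.
  rewrite (span_kill hx h hy) b0r //.
  by case: eqP => //; lia.
Qed.


Unset Implicit Arguments.
Theorem mainTheorem5 :
  (forall (R : rcfType) (V : vectType R) (b : V -> V -> R) (T : 'End(V))
          (lam : R) (x : V) (p : nat),
     scalar_product b -> self_adjoint b T -> is_eigenvalue T lam ->
     cycle_len T lam x p ->
     b (cyc_vec T lam x p 1) (cyc_vec T lam x p p) != 0 ->
     exists x' : V,
       [/\ x' \in cyc_span T lam x p,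
           cycle_len T lam x' p,
           cyc_span T lam x' p = cyc_span T lam x p
         & skew_normal b (cyc_vec T lam x' p) p
             (Num.sg (b (cyc_vec T lam x p 1) (cyc_vec T lam x p p)))])
  /\
  (forall (C : numClosedFieldType) (V : vectType C) (b : V -> V -> C) (T : 'End(V))
          (lam : C) (x : V) (p : nat),
     scalar_product b -> self_adjoint b T -> is_eigenvalue T lam ->
     cycle_len T lam x p ->
     b (cyc_vec T lam x p 1) (cyc_vec T lam x p p) != 0 ->
     exists x' : V,
       [/\ x' \in cyc_span T lam x p,
           cycle_len T lam x' p,
           cyc_span T lam x' p = cyc_span T lam x p
         & skew_normal b (cyc_vec T lam x' p) p 1]).
Proof.
split.
- move=> R V b T lam x p sp sa _ hc hnz.
  set c := b _ _ in hnz *.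
  apply: (main_gen (s := (Num.sqrt `|c|)^-1) sp sa hc).
    case: (ltrgt0P c) => h; first [left; exact: gtr0_sg h | right; exact: ltr0_sg h | by rewrite h eqxx in hnz].
  have e : (Num.sqrt `|c|)^-1 ^+ 2 = `|c|^-1 by rewrite exprVn sqr_sqrtr ?normr_ge0.
  change ((Num.sqrt `|c|)^-1 ^+ 2 * c = Num.sg c).
  rewrite e {2}(numEsg c) mulrC mulfK //.
  by rewrite normr_eq0.
- move=> C V b T lam x p sp sa _ hc hnz.
  apply: (main_gen (s := sqrtC (b (cyc_vec T lam x p 1) (cyc_vec T lam x p p))^-1) sp sa hc).
    by left.
  by rewrite sqrtCK mulVf.
Qed.
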